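(* Let $G$ and $H$ be graphs, each with at least two vertices. (1) If $n_1,n_2\ge1$ and $r_1,r_2\in(0,1)$ with $r_1^2+r_2^2=1$ are such that $G$ admits a spherical embedding of dimension $n_1$ and radius $r_1$ and $H$ admits a spherical embedding of dimension $n_2$ and radius $r_2$, then $G+H$ has a unit-distance embedding in $\mathbb{R}^{n_1+n_2}$. (2) Conversely, if $G+H$ has a unit-distance embedding in $\mathbb{R}^n$, then there exist $n_1,n_2\ge1$ with $n_1+n_2=n$ and $r_1,r_2\in(0,1)$ with $r_1^2+r_2^2=1$ such that $G$ admits a spherical embedding of dimension $n_1$ and radius $r_1$ and $H$ admits a spherical embedding of dimension $n_2$ and radius $r_2$.
   Context: All graphs are finite and simple. A unit-distance embedding of a graph $G$ in $\mathbb{R}^n$ is an injective map $f$ from the vertex set of $G$ to $\mathbb{R}^n$ such that $|f(u)-f(v)|=1$ for every edge $uv$ and no point $f(w)$ lies on the segment $[f(u),f(v)]$ for an edge $uv$ with $w\notin\{u,v\}$ (edges may cross one another). $G$ admits a spherical embedding of dimension $k$ and radius $r$ if $G$ has a unit-distance embedding in $\mathbb{R}^k$ all of whose vertices lie on a sphere $\{x\in\mathbb{R}^k:|x-c|=r\}$. The sum $G+H$ is obtained from disjoint copies of $G$ and $H$ by adding all edges between a vertex of $G$ and a vertex of $H$. *)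

(* Defs.v *)
From HB Require Import structures.
From mathcomp Require Import all_boot all_order all_algebra.
From mathcomp Require Import reals.
Set Implicit Arguments. Unset Strict Implicit. Unset Printing Implicit Defensive.
Import Order.TTheory GRing.Theory Num.Theory.
Local Open Scope ring_scope.

Definition simple_graph (T : finType) (e : rel T) : Prop :=
  symmetric e /\ irreflexive e.

Definition sqdist (R : realType) (n : nat) (x y : 'rV[R]_n) : R :=
  \sum_(i < n) (x 0 i - y 0 i) ^+ 2.

Definition edist (R : realType) (n : nat) (x y : 'rV[R]_n) : R :=
  Num.sqrt (sqdist x y).

Definition on_segment (R : realType) (n : nat) (a b w : 'rV[R]_n) : Prop :=
  exists t : R, 0 <= t <= 1 /\ w = (1 - t) *: a + t *: b.

Definition unit_dist_embedding (R : realType) (T : finType) (e : rel T)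
    (n : nat) (f : T -> 'rV[R]_n) : Prop :=
  [/\ injective f,
      (forall u v, e u v -> edist (f u) (f v) = 1) &
      (forall u v w, e u v -> w != u -> w != v ->
         ~ on_segment (f u) (f v) (f w))].

Definition has_unit_dist_embedding (R : realType) (T : finType) (e : rel T)
    (n : nat) : Prop :=
  exists f : T -> 'rV[R]_n, unit_dist_embedding e f.

Definition spherical_embedding (R : realType) (T : finType) (e : rel T)
    (k : nat) (r : R) : Prop :=
  exists (f : T -> 'rV[R]_k) (c : 'rV[R]_k),
    unit_dist_embedding e f /\ forall x, edist (f x) c = r.

Definition graph_join (T1 T2 : finType) (e1 : rel T1) (e2 : rel T2)
    : rel (T1 + T2)%type :=
  fun x y => match x, y with
  | inl a, inl b => e1 a b
  | inr a, inr b => e2 a b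
  | _, _ => true
  end.

(* Main.v *)
Require Import Defs.
From HB Require Import structures.
From mathcomp Require Import all_boot all_order all_algebra.
From mathcomp Require Import reals.
From mathcomp Require Import ring lra zify.
Import Order.TTheory GRing.Theory Num.Theory.
Local Open Scope ring_scope.
Set Implicit Arguments. Unset Strict Implicit. Unset Printing Implicit Defensive.

Definition dot {R : realType} {n : nat} (x y : 'rV[R]_n) : R :=
  \sum_(i < n) x 0 i * y 0 i.

Lemma dotC {R : realType} {n : nat} (x y : 'rV[R]_n) : dot x y = dot y x.
Proof. by apply: eq_bigr => i _; rewrite mulrC. Qed.

Lemma dotDl {R : realType} {n : nat} (x y z : 'rV[R]_n) :
  dot (x + y) z = dot x z + dot y z.
Proof. by rewrite /dot -big_split; apply: eq_bigr => i _; rewrite !mxE mulrDl. Qed.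

Lemma dotZl {R : realType} {n : nat} (a : R) (x z : 'rV[R]_n) :
  dot (a *: x) z = a * dot x z.
Proof. by rewrite /dot mulr_sumr; apply: eq_bigr => i _; rewrite !mxE mulrA. Qed.

Lemma dotNl {R : realType} {n : nat} (x z : 'rV[R]_n) : dot (- x) z = - dot x z.
Proof. by rewrite -scaleN1r dotZl mulN1r. Qed.

Lemma dotBl {R : realType} {n : nat} (x y z : 'rV[R]_n) :
  dot (x - y) z = dot x z - dot y z.
Proof. by rewrite dotDl dotNl. Qed.

Lemma dot0l {R : realType} {n : nat} (z : 'rV[R]_n) : dot 0 z = 0.
Proof. by rewrite /dot big1 // => i _; rewrite mxE mul0r. Qed.

Lemma dot_suml {R : realType} {n : nat} m (F : 'I_m -> 'rV[R]_n) z :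
  dot (\sum_(i < m) F i) z = \sum_(i < m) dot (F i) z.
Proof.
rewrite /dot exchange_big /=; apply: eq_bigr => j _.
by rewrite summxE mulr_suml.
Qed.

Lemma dotDr {R : realType} {n : nat} (x y z : 'rV[R]_n) :
  dot z (x + y) = dot z x + dot z y.
Proof. by rewrite dotC dotDl !(dotC z). Qed.
Lemma dotZr {R : realType} {n : nat} (a : R) (x z : 'rV[R]_n) :
  dot z (a *: x) = a * dot z x.
Proof. by rewrite dotC dotZl dotC. Qed.
Lemma dotBr {R : realType} {n : nat} (x y z : 'rV[R]_n) :
  dot z (x - y) = dot z x - dot z y.
Proof. by rewrite dotC dotBl !(dotC z). Qed.
Lemma dot0r {R : realType} {n : nat} (z : 'rV[R]_n) : dot z 0 = 0.
Proof. by rewrite dotC dot0l. Qed.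
Lemma dot_sumr {R : realType} {n : nat} m (F : 'I_m -> 'rV[R]_n) z :
  dot z (\sum_(i < m) F i) = \sum_(i < m) dot z (F i).
Proof. by rewrite dotC dot_suml; apply: eq_bigr => i _; rewrite dotC. Qed.

Lemma dot_ge0 {R : realType} {n : nat} (x : 'rV[R]_n) : 0 <= dot x x.
Proof. by apply: sumr_ge0 => i _; rewrite -expr2 sqr_ge0. Qed.

Lemma dot_eq0 {R : realType} {n : nat} (x : 'rV[R]_n) : dot x x = 0 -> x = 0.
Proof.
move/eqP; rewrite psumr_eq0; last by move=> i _; rewrite -expr2 sqr_ge0.
move/allP=> H; apply/rowP => j; rewrite mxE.
by have := H j (mem_index_enum _); rewrite /= -expr2 sqrf_eq0 => /eqP.
Qed.

Lemma sqdistE {R : realType} {n : nat} (x y : 'rV[R]_n) : sqdist x y = dot (x - y) (x - y).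
Proof. by apply: eq_bigr => i _; rewrite !mxE expr2. Qed.

Lemma sqdistC {R : realType} {n : nat} (x y : 'rV[R]_n) : sqdist x y = sqdist y x.
Proof. by apply: eq_bigr => i _; rewrite -sqrrN opprB. Qed.

Lemma sqdist_ge0 {R : realType} {n : nat} (x y : 'rV[R]_n) : 0 <= sqdist x y.
Proof. rewrite sqdistE; exact: dot_ge0. Qed.

Lemma sqdist_eq0 {R : realType} {n : nat} (x y : 'rV[R]_n) : sqdist x y = 0 -> x = y.
Proof. by rewrite sqdistE => /dot_eq0 /eqP; rewrite subr_eq0 => /eqP. Qed.

Lemma sqdist_row_mx {R : realType} {k m : nat} (a a' : 'rV[R]_k) (b b' : 'rV[R]_m) :
  sqdist (row_mx a b) (row_mx a' b') = sqdist a a' + sqdist b b'.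
Proof.
rewrite /sqdist big_split_ord /=; congr (_ + _); apply: eq_bigr => i _;
  by rewrite ?row_mxEl ?row_mxEr.
Qed.

Lemma edist_sq {R : realType} {n : nat} (x y : 'rV[R]_n) r :
  edist x y = r -> sqdist x y = r ^+ 2.
Proof. by rewrite /edist => <-; rewrite sqr_sqrtr // sqdist_ge0. Qed.


Definition proj {R : realType} {n : nat} (s : seq 'rV[R]_n) (x : 'rV[R]_n) :=
  \sum_(i < size s) dot x s`_i *: s`_i.

Definition orthonormal {R : realType} {n : nat} (s : seq 'rV[R]_n) :=
  forall i j, (i < size s)%N -> (j < size s)%N -> dot s`_i s`_j = (i == j)%:R.

Lemma sum_delta {R : realType} m (F : nat -> R) j : (j < m)%N ->
  \sum_(i < m) F i * ((i : nat) == j)%:R = F j.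
Proof.
move=> Hj; rewrite (bigD1 (Ordinal Hj)) //= eqxx mulr1 big1 ?addr0 // => i Hi.
have -> : ((i : nat) == j) = false.
  by apply/negbTE; apply: contra Hi => /eqP Hij; apply/eqP/val_inj.
by rewrite mulr0.
Qed.

Lemma dot_proj {R : realType} {n : nat} (s : seq 'rV[R]_n) x j :
  orthonormal s -> (j < size s)%N -> dot (proj s x) s`_j = dot x s`_j.
Proof.
move=> Hs Hj; rewrite /proj dot_suml.
rewrite (eq_bigr (fun i : 'I_(size s) => dot x s`_i * ((i : nat) == j)%:R)).
  by rewrite (sum_delta (fun i => dot x s`_i)).
by move=> i _; rewrite dotZl Hs.
Qed.

Lemma dotr_proj {R : realType} {n : nat} (s : seq 'rV[R]_n) x w :
  dot w (proj s x) = \sum_(i < size s) dot x s`_i * dot w s`_i.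
Proof. by rewrite /proj dot_sumr; apply: eq_bigr => i _; rewrite dotZr. Qed.

Lemma orthonormal_catl {R : realType} {n : nat} (s0 s1 : seq 'rV[R]_n) :
  orthonormal (s0 ++ s1) -> orthonormal s0.
Proof.
move=> H i j Hi Hj; have := H i j; rewrite size_cat !nth_cat Hi Hj; apply; lia.
Qed.

Lemma orthonormal_catr {R : realType} {n : nat} (s0 s1 : seq 'rV[R]_n) :
  orthonormal (s0 ++ s1) -> orthonormal s1.
Proof.
move=> H i j Hi Hj; have := H (size s0 + i)%N (size s0 + j)%N.
rewrite size_cat !nth_cat.
have -> : (size s0 + i < size s0)%N = false by lia.
have -> : (size s0 + j < size s0)%N = false by lia.
rewrite !addKn eqn_add2l; apply; lia.
Qed.

Lemma orth_cat {R : realType} {n : nat} (s0 s1 : seq 'rV[R]_n) i j :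
  orthonormal (s0 ++ s1) -> (j < size s0)%N -> (i < size s1)%N ->
  dot s0`_j s1`_i = 0.
Proof.
move=> H Hj Hi; have := H j (size s0 + i)%N.
rewrite size_cat !nth_cat Hj.
have -> : (size s0 + i < size s0)%N = false by lia.
rewrite addKn.
have -> : (j == size s0 + i)%N = false by apply/negbTE; lia.
apply; lia.
Qed.

Lemma proj_cat {R : realType} {n : nat} (s0 s1 : seq 'rV[R]_n) x :
  proj (s0 ++ s1) x = proj s0 x + proj s1 x.
Proof.
rewrite /proj size_cat big_split_ord /=; congr (_ + _); apply: eq_bigr => i _.
  by rewrite nth_cat ltn_ord.
by rewrite nth_cat (_ : (size s0 + i < size s0)%N = false) ?addKn //; lia.
Qed.




Lemma proj_cat_span {R : realType} {n : nat} (s0 s1 : seq 'rV[R]_n) x :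
  orthonormal (s0 ++ s1) -> proj s0 x = x -> proj (s0 ++ s1) x = x.
Proof.
move=> H Hx; rewrite proj_cat Hx [X in _ + X](_ : _ = 0) ?addr0 //.
rewrite /proj big1 // => i _.
rewrite -Hx dotC dotr_proj big1 ?scale0r // => j _.
by rewrite (dotC s1`__) (orth_cat H) ?mulr0.
Qed.

Lemma orthonormal_rcons {R : realType} {n : nat} (s : seq 'rV[R]_n) b :
  orthonormal s -> (forall j, (j < size s)%N -> dot s`_j b = 0) -> dot b b = 1 ->
  orthonormal (rcons s b).
Proof.
move=> Hs Hb Hbb i j; rewrite size_rcons !ltnS !nth_rcons => Hi Hj.
have [ilt|ieq] : (i < size s)%N \/ i = size s by lia.
  have [jlt|jeq] : (j < size s)%N \/ j = size s by lia.
    by rewrite ilt jlt Hs.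
  rewrite ilt jeq ltnn eqxx Hb //.
  by have -> : (i == size s) = false by lia.
have [jlt|jeq] : (j < size s)%N \/ j = size s by lia.
  rewrite ieq jlt ltnn eqxx dotC Hb //.
  by have -> : (size s == j) = false by lia.
by rewrite ieq jeq ltnn eqxx.
Qed.

Lemma gs {R : realType} {n : nat} (V : seq 'rV[R]_n) : forall s0, orthonormal s0 ->
  exists s1, [/\ orthonormal (s0 ++ s1),
    (forall v, v \in V -> proj (s0 ++ s1) v = v) &
    (forall w, (forall u, u \in s0 -> dot w u = 0) ->
       (forall v, v \in V -> dot w v = 0) -> forall b, b \in s1 -> dot w b = 0)].
Proof.
elim: V => [|v V IH] s0 Hs0.
  by exists [::]; rewrite cats0; split.
set w0 := v - proj s0 v.
have HA : forall j, (j < size s0)%N -> dot w0 s0`_j = 0.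
  by move=> j Hj; rewrite /w0 dotBl dot_proj // subrr.
have Hperp : forall w, (forall u, u \in s0 -> dot w u = 0) -> dot w (proj s0 v) = 0.
  move=> w Hw; rewrite dotr_proj big1 // => i _.
  by rewrite Hw ?mulr0 // mem_nth.
have [w00|w0n0] := eqVneq w0 0.
  have Hv : proj s0 v = v by apply/eqP; rewrite eq_sym -subr_eq0; apply/eqP.
  have [s1 [H1 H2 H3]] := IH s0 Hs0.
  exists s1; split => //.
  - move=> x; rewrite in_cons => /orP[/eqP ->|]; last exact: H2.
    exact: proj_cat_span.
  - move=> w Hw Hv'; apply: H3 => // x Hx; apply: Hv'.
    by rewrite in_cons Hx orbT.
set d := dot w0 w0.
have d0 : 0 < d.
  rewrite lt_def dot_ge0 andbT; apply/eqP => /dot_eq0 H.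
  by rewrite H eqxx in w0n0.
set b := (Num.sqrt d)^-1 *: w0.
have sd0 : 0 < Num.sqrt d by rewrite sqrtr_gt0.
have Hbb : dot b b = 1.
  rewrite /b dotZl dotZr -/d mulrA -expr2 exprVn sqr_sqrtr ?mulVf //.
    by rewrite gt_eqF.
  exact: ltW.
have Hs0' : orthonormal (rcons s0 b).
  apply: orthonormal_rcons => // j Hj.
  by rewrite /b dotZr dotC HA // mulr0.
have [s1 [H1 H2 H3]] := IH _ Hs0'.
exists (b :: s1); rewrite -cat_rcons; split => //.
- move=> x; rewrite in_cons => /orP[/eqP ->|]; last exact: H2.
  apply: proj_cat_span => //.
  rewrite -cats1 proj_cat (_ : proj [:: b] v = dot v b *: b); last first.
    by rewrite /proj big_ord1.
  have -> : dot v b = Num.sqrt d.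
    have -> : v = w0 + proj s0 v by rewrite /w0 subrK.
    rewrite dotDl (dotC (proj s0 v)) Hperp; last first.
      move=> u /(nthP 0) [j Hj <-].
      by rewrite /b dotZl HA ?mulr0.
    rewrite addr0 /b dotZr -/d.
    by rewrite -[X in _ * X = _](sqr_sqrtr (ltW d0)) expr2 mulrA mulVf ?gt_eqF // mul1r.
  rewrite /b scalerA mulfV ?gt_eqF // scale1r /w0.
  by rewrite addrC subrK.
- move=> w Hw Hv'.
  have Hwb : dot w b = 0.
    rewrite /b dotZr /w0 dotBr Hperp // Hv' ?mem_head //.
    by rewrite subrr mulr0.
  move=> x; rewrite in_cons => /orP[/eqP ->|] //.
  apply: H3.
    move=> u; rewrite mem_rcons in_cons => /orP[/eqP ->|] //; exact: Hw.
  by move=> y Hy; apply: Hv'; rewrite in_cons Hy orbT.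
Qed.


Lemma dot_delta {R : realType} {n : nat} (i : 'I_n) (y : 'rV[R]_n) :
  dot (delta_mx 0 i) y = y 0 i.
Proof.
rewrite /dot (bigD1 i) //= mxE !eqxx mul1r big1 ?addr0 // => j Hj.
by rewrite mxE eqxx /= (negbTE Hj) mul0r.
Qed.

Lemma proj_sum {R : realType} {n : nat} (s : seq 'rV[R]_n) m (F : 'I_m -> 'rV[R]_n) :
  proj s (\sum_(i < m) F i) = \sum_(i < m) proj s (F i).
Proof.
rewrite /proj exchange_big /=; apply: eq_bigr => k _.
by rewrite dot_suml scaler_suml.
Qed.

Lemma proj_scale {R : realType} {n : nat} (s : seq 'rV[R]_n) a x :
  proj s (a *: x) = a *: proj s x.
Proof.
rewrite /proj scaler_sumr; apply: eq_bigr => k _.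
by rewrite dotZl scalerA.
Qed.

Lemma proj_all {R : realType} {n : nat} (s : seq 'rV[R]_n) :
  (forall i : 'I_n, proj s (delta_mx 0 i) = delta_mx 0 i) -> forall x, proj s x = x.
Proof.
move=> H x; rewrite [in LHS](row_sum_delta x) proj_sum.
rewrite [in RHS](row_sum_delta x); apply: eq_bigr => i _.
by rewrite proj_scale H.
Qed.

Definition smx {R : realType} {n : nat} (s : seq 'rV[R]_n) : 'M[R]_(size s, n) :=
  \matrix_(i < size s, j < n) s`_i 0 j.

Lemma size_basis {R : realType} {n : nat} (s : seq 'rV[R]_n) :
  orthonormal s -> (forall x, proj s x = x) -> size s = n.
Proof.
move=> Ho Hp.
have H1 : smx s *m (smx s)^T = 1%:M.
  apply/matrixP => i j; rewrite /smx !mxE.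
  transitivity (dot s`_i s`_j); first by apply: eq_bigr => k _; rewrite !mxE.
  by rewrite Ho.
have H2 : (smx s)^T *m smx s = 1%:M.
  apply/matrixP => i j; rewrite /smx !mxE.
  have := congr1 (fun y : 'rV[R]_n => y 0 j) (Hp (delta_mx 0 i)).
  rewrite /proj summxE mxE eqxx /= => H; rewrite eq_sym -H.
  by apply: eq_bigr => k _; rewrite !mxE dot_delta.
apply/eqP; rewrite eqn_leq; apply/andP; split.
  rewrite -{1}(mxrank1 R (size s)) -H1.
  exact: leq_trans (mxrankM_maxl _ _) (rank_leq_col _).
rewrite -{1}(mxrank1 R n) -H2.
apply: leq_trans (mxrankM_maxl _ _) _.
by rewrite mxrank_tr rank_leq_row.
Qed.


Definition coord {R : realType} {n : nat} (s : seq 'rV[R]_n) (x : 'rV[R]_n) :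
  'rV[R]_(size s) := \row_(j < size s) dot x s`_j.

Lemma coordD {R : realType} {n : nat} (s : seq 'rV[R]_n) x y :
  coord s (x + y) = coord s x + coord s y.
Proof. by apply/rowP => j; rewrite !mxE dotDl. Qed.
Lemma coordZ {R : realType} {n : nat} (s : seq 'rV[R]_n) a x :
  coord s (a *: x) = a *: coord s x.
Proof. by apply/rowP => j; rewrite !mxE dotZl. Qed.
Lemma coordB {R : realType} {n : nat} (s : seq 'rV[R]_n) x y :
  coord s (x - y) = coord s x - coord s y.
Proof. by apply/rowP => j; rewrite !mxE dotBl. Qed.

Lemma sqdist_xx {R : realType} {n : nat} (x : 'rV[R]_n) : sqdist x x = 0.
Proof. by rewrite sqdistE subrr dot0l. Qed.

Lemma key_split {R : realType} {n : nat} (s1 s2 : seq 'rV[R]_n) x y :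
  orthonormal (s1 ++ s2) -> (forall x, proj (s1 ++ s2) x = x) ->
  sqdist (coord s1 x) (coord s1 y) + sqdist (coord s2 x) (coord s2 y) = sqdist x y.
Proof.
move=> Ho Hp; rewrite [RHS]sqdistE -[X in dot _ X](Hp (x - y)) proj_cat dotDr.
rewrite !dotr_proj /sqdist; congr (_ + _); apply: eq_bigr => j _;
  by rewrite !mxE -dotBl expr2.
Qed.

Lemma coord_inj {R : realType} {n : nat} (s1 s2 : seq 'rV[R]_n) x y :
  orthonormal (s1 ++ s2) -> (forall x, proj (s1 ++ s2) x = x) ->
  coord s1 x = coord s1 y -> coord s2 x = coord s2 y -> x = y.
Proof.
move=> Ho Hp H1 H2; apply: sqdist_eq0.
by rewrite -(key_split x y Ho Hp) H1 H2 !sqdist_xx addr0.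
Qed.


Lemma sqdist_trans {R : realType} {n : nat} (x y c : 'rV[R]_n) :
  sqdist (x - c) (y - c) = sqdist x y.
Proof. by rewrite !sqdistE opprB addrA subrK. Qed.

Lemma sqdist_sub0 {R : realType} {n : nat} (x c : 'rV[R]_n) :
  sqdist (x - c) 0 = sqdist x c.
Proof. by rewrite !sqdistE subr0. Qed.

Lemma comb_sub {R : realType} {n : nat} (t : R) (x y c : 'rV[R]_n) :
  (1 - t) *: (x - c) + t *: (y - c) = (1 - t) *: x + t *: y - c.
Proof.
rewrite !scalerBr addrACA -opprD -scalerDl subrK scale1r //.
Qed.

Lemma seg_row_mx {R : realType} {k m : nat} (a a' a'' : 'rV[R]_k) (b b' b'' : 'rV[R]_m) :
  on_segment (row_mx a b) (row_mx a' b') (row_mx a'' b'') ->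
  exists t : R, [/\ 0 <= t <= 1, a'' = (1 - t) *: a + t *: a' &
                     b'' = (1 - t) *: b + t *: b'].
Proof.
case=> t [Ht]; rewrite !scale_row_mx add_row_mx => /eq_row_mx [-> ->].
by exists t.
Qed.

Lemma on_segment_sym {R : realType} {n : nat} (a b w : 'rV[R]_n) :
  on_segment a b w -> on_segment b a w.
Proof.
case=> t [/andP [t0 t1] ->]; exists (1 - t); split.
  by apply/andP; split; lra.
have -> : 1 - (1 - t) = t by ring.
by rewrite addrC.
Qed.

Lemma sqdist_pos {R : realType} {n : nat} (x c : 'rV[R]_n) r :
  0 < r -> edist x c = r -> x - c != 0.
Proof.
move=> r0 /edist_sq H; apply/eqP => H0.
have : sqdist (x - c) 0 = 0 by rewrite H0 sqdist_xx.
by rewrite sqdist_sub0 H => /eqP; rewrite sqrf_eq0 gt_eqF.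
Qed.

Lemma part1 (R : realType) (T1 T2 : finType) (e1 : rel T1) (e2 : rel T2)
  (n1 n2 : nat) (r1 r2 : R) :
  0 < r1 -> 0 < r2 -> r1 ^+ 2 + r2 ^+ 2 = 1 ->
  spherical_embedding e1 n1 r1 -> spherical_embedding e2 n2 r2 ->
  has_unit_dist_embedding R (graph_join e1 e2) (n1 + n2).
Proof.
move=> r10 r20 hr [f1 [c1 [[inj1 d1 seg1] rad1]]] [f2 [c2 [[inj2 d2 seg2] rad2]]].
pose F (x : T1 + T2) : 'rV[R]_(n1 + n2) :=
  match x with inl a => row_mx (f1 a - c1) 0 | inr b => row_mx 0 (f2 b - c2) end.
have nz1 a : f1 a - c1 != 0 by apply: sqdist_pos (rad1 a).
have nz2 b : f2 b - c2 != 0 by apply: sqdist_pos (rad2 b).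
have cross u v : edist (F (inl u)) (F (inr v)) = 1.
  rewrite /edist /= sqdist_row_mx sqdist_sub0 (sqdistC 0) sqdist_sub0.
  by rewrite (edist_sq (rad1 u)) (edist_sq (rad2 v)) hr sqrtr1.
have crossseg u v w : w != inl u -> w != inr v ->
    ~ on_segment (F (inl u)) (F (inr v)) (F w).
  case: w => [w|w] Hu Hv /=.
    move/seg_row_mx => [t [Ht Ha Hb]].
    move: Hb; rewrite scaler0 add0r => /esym/eqP; rewrite scaler_eq0 (negbTE (nz2 v)) orbF.
    move=> /eqP t0; move: Ha; rewrite t0 subr0 scale1r scale0r addr0 => /eqP.
    rewrite (can_eq (subrK c1)) => /eqP /inj1 wu.
    by rewrite wu eqxx in Hu.
  move/seg_row_mx => [t [Ht Ha Hb]].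
  move: Ha; rewrite scaler0 addr0 => /esym/eqP; rewrite scaler_eq0 (negbTE (nz1 u)) orbF.
  rewrite subr_eq0 => /eqP t1; move: Hb; rewrite -t1 subrr scale0r add0r scale1r => /eqP.
  rewrite (can_eq (subrK c2)) => /eqP /inj2 wv.
  by rewrite wv eqxx in Hv.
exists F; split.
- move=> [x|x] [y|y] /= /eq_row_mx [Ha Hb].
  + by congr inl; apply: inj1; move/eqP: Ha; rewrite (can_eq (subrK c1)) => /eqP.
  + by move: (nz1 x); rewrite Ha eqxx.
  + by move: (nz1 y); rewrite -Ha eqxx.
  + by congr inr; apply: inj2; move/eqP: Hb; rewrite (can_eq (subrK c2)) => /eqP.
- move=> [u|u] [v|v] /= H.
  + by rewrite /edist sqdist_row_mx sqdist_trans sqdist_xx addr0 -(d1 _ _ H).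
  + exact: cross.
  + by rewrite /edist sqdistC -/(edist _ _) cross.
  + by rewrite /edist sqdist_row_mx sqdist_trans sqdist_xx add0r -(d2 _ _ H).
- move=> [u|u] [v|v] w /= H Hu Hv.
  + case: w Hu Hv => [w|w] Hu Hv /= /seg_row_mx [t [Ht Ha Hb]].
      apply: (seg1 u v w H).
      - by apply: contra Hu => /eqP ->.
      - by apply: contra Hv => /eqP ->.
      exists t; split => //; move/eqP: Ha.
      by rewrite comb_sub (can_eq (subrK c1)) => /eqP.
    by move: Hb; rewrite !scaler0 addr0 => /eqP; rewrite (negbTE (nz2 w)).
  + exact: crossseg.
  + by move=> /on_segment_sym; apply: crossseg.
  + case: w Hu Hv => [w|w] Hu Hv /= /seg_row_mx [t [Ht Ha Hb]].
      by move: Ha; rewrite !scaler0 addr0 => /eqP; rewrite (negbTE (nz1 w)).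
    apply: (seg2 u v w H).
    - by apply: contra Hu => /eqP ->.
    - by apply: contra Hv => /eqP ->.
    exists t; split => //; move/eqP: Hb.
    by rewrite comb_sub (can_eq (subrK c2)) => /eqP.
Qed.


Lemma polar {R : realType} {n : nat} (p p0 q q0 : 'rV[R]_n) :
  2 * dot (p - p0) (q - q0) =
  sqdist p q0 + sqdist p0 q - sqdist p q - sqdist p0 q0.
Proof.
rewrite /sqdist /dot mulr_sumr -big_split -!sumrB /=.
by apply: eq_bigr => i _; rewrite !mxE; ring.
Qed.

Lemma sqdist_dim0 {R : realType} {k : nat} (x y : 'rV[R]_k) : k = 0%N -> sqdist x y = 0.
Proof. by move=> Hk; rewrite /sqdist big1 // => i _; have := ltn_ord i; rewrite {2}Hk. Qed.

Lemma two_elems (T : finType) : (2 <= #|T|)%N -> exists a0 a1 : T, a0 != a1.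
Proof. by move=> /card_gt1P [x [y [_ _ Hxy]]]; exists x, y. Qed.

Lemma part2 (R : realType) (T1 T2 : finType) (e1 : rel T1) (e2 : rel T2) (n : nat) :
  (2 <= #|T1|)%N -> (2 <= #|T2|)%N ->
  has_unit_dist_embedding R (graph_join e1 e2) n ->
  exists (n1 n2 : nat) (r1 r2 : R),
    [/\ (1 <= n1)%N, (1 <= n2)%N, (n1 + n2 = n)%N, 0 < r1 < 1 & 0 < r2 < 1] /\
    [/\ r1 ^+ 2 + r2 ^+ 2 = 1, spherical_embedding e1 n1 r1 &
        spherical_embedding e2 n2 r2].
Proof.
move=> h1 h2 [F [injF dF segF]].
have [a0 [a1 a01]] := two_elems h1.
have [b0 [b1 b01]] := two_elems h2.
pose P a := F (inl a); pose Q b := F (inr b).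
have sq1 a b : sqdist (P a) (Q b) = 1.
  by rewrite (edist_sq (dF (inl a) (inr b) isT)) expr1n.
have orth a b : dot (P a - P a0) (Q b - Q b0) = 0.
  have := polar (P a) (P a0) (Q b) (Q b0).
  rewrite !sq1 addrK subrr => /eqP; rewrite mulf_eq0 pnatr_eq0 /=.
  by move/eqP.
pose V1 := [seq P a - P a0 | a <- enum T1].
have O0 : orthonormal (@nil 'rV[R]_n) by [].
have [s1 [H1o H1p H1w]] := gs V1 O0.
rewrite cat0s in H1o H1p.
pose V2 := [seq delta_mx 0 i : 'rV[R]_n | i <- enum 'I_n].
have [s2 [Ho H2p _]] := gs V2 H1o.
have Hp : forall x, proj (s1 ++ s2) x = x.
  by apply: proj_all => i; apply: H2p; apply: map_f; rewrite mem_enum.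
have Hsize := size_basis Ho Hp; rewrite size_cat in Hsize.
have inV1 a : P a - P a0 \in V1 by apply: map_f; rewrite mem_enum.
have HPs2 a : coord s2 (P a - P a0) = 0.
  apply/rowP => j; rewrite !mxE -(H1p _ (inV1 a)) dotC dotr_proj big1 // => i _.
  by rewrite (dotC s2`_j) (orth_cat Ho) ?mulr0.
have HQs1 b : coord s1 (Q b - P a0) = coord s1 (Q b0 - P a0).
  have -> : Q b - P a0 = (Q b - Q b0) + (Q b0 - P a0) by rewrite addrA subrK.
  rewrite coordD [X in X + _](_ : _ = 0) ?add0r //.
  apply/rowP => j; rewrite !mxE; apply: H1w => //.
    by move=> v /mapP [a _ ->]; rewrite dotC orth.
  exact: mem_nth.
pose f1 a := coord s1 (P a - P a0).
pose c1 := coord s1 (Q b0 - P a0).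
pose f2 b := coord s2 (Q b - P a0).
have KS x y := key_split x y Ho Hp.
have D1 a a' : sqdist (f1 a) (f1 a') = sqdist (P a) (P a').
  have := KS (P a - P a0) (P a' - P a0).
  by rewrite !HPs2 sqdist_xx addr0 sqdist_trans.
have D2 b b' : sqdist (f2 b) (f2 b') = sqdist (Q b) (Q b').
  have := KS (Q b - P a0) (Q b' - P a0).
  by rewrite !HQs1 sqdist_xx add0r sqdist_trans.
have DX a b : sqdist (f1 a) c1 + sqdist (f2 b) 0 = 1.
  have := KS (P a - P a0) (Q b - P a0).
  by rewrite HQs1 HPs2 sqdist_trans sq1 (sqdistC 0).
pose rho1 := sqdist (f1 a0) c1; pose rho2 := sqdist (f2 b0) 0.
have R12 : rho1 + rho2 = 1 by apply: DX.
have Rad1 a : sqdist (f1 a) c1 = rho1.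
  by apply: (addIr rho2); rewrite R12; exact: DX.
have Rad2 b : sqdist (f2 b) 0 = rho2.
  by apply: (addrI rho1); rewrite R12; exact: DX.
have injP a a' : P a = P a' -> a = a' by move/injF => [].
have injQ b b' : Q b = Q b' -> b = b' by move/injF => [].
have rho1p : 0 < rho1.
  rewrite lt_def sqdist_ge0 andbT; apply/eqP => H0.
  have E0 := sqdist_eq0 H0.
  have E1 : f1 a1 = c1 by apply: sqdist_eq0; rewrite Rad1.
  have : sqdist (P a0) (P a1) = 0 by rewrite -D1 E0 E1 sqdist_xx.
  by move/sqdist_eq0/injP => E; rewrite E eqxx in a01.
have rho2p : 0 < rho2.
  rewrite lt_def sqdist_ge0 andbT; apply/eqP => H0.
  have E0 := sqdist_eq0 H0.
  have E1 : f2 b1 = 0 by apply: sqdist_eq0; rewrite Rad2.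
  have : sqdist (Q b0) (Q b1) = 0 by rewrite -D2 E0 E1 sqdist_xx.
  by move/sqdist_eq0/injQ => E; rewrite E eqxx in b01.
exists (size s1), (size s2), (Num.sqrt rho1), (Num.sqrt rho2).
have sq1e : Num.sqrt rho1 ^+ 2 = rho1 by rewrite sqr_sqrtr // ltW.
have sq2e : Num.sqrt rho2 ^+ 2 = rho2 by rewrite sqr_sqrtr // ltW.
have r1p : 0 < Num.sqrt rho1 by rewrite sqrtr_gt0.
have r2p : 0 < Num.sqrt rho2 by rewrite sqrtr_gt0.
split; split => //.
- rewrite lt0n; apply/negP => /eqP Hk.
  have : sqdist (P a0) (P a1) = 0 by rewrite -D1 sqdist_dim0.
  by move/sqdist_eq0/injP => E; rewrite E eqxx in a01.
- rewrite lt0n; apply/negP => /eqP Hk.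
  have : sqdist (Q b0) (Q b1) = 0 by rewrite -D2 sqdist_dim0.
  by move/sqdist_eq0/injQ => E; rewrite E eqxx in b01.
- rewrite r1p /=; nra.
- rewrite r2p /=; nra.
- by rewrite sq1e sq2e.
- exists f1, c1; split; last by move=> x; rewrite /edist Rad1.
  split.
  + move=> u v E; apply: injP; apply: sqdist_eq0.
    by rewrite -D1 E sqdist_xx.
  + by move=> u v H; rewrite /edist D1; exact: (dF (inl u) (inl v) H).
  + move=> u v w H Hu Hv [t [Ht Hw]].
    apply: (segF (inl u) (inl v) (inl w) H).
    * by apply: contra Hu => /eqP [->].
    * by apply: contra Hv => /eqP [->].
    exists t; split => //.
    have : P w - P a0 = (1 - t) *: (P u - P a0) + t *: (P v - P a0).
      apply: (coord_inj Ho Hp).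
        by rewrite [in RHS]coordD !coordZ.
      by rewrite [in RHS]coordD !coordZ !HPs2 !scaler0 addr0.
    by rewrite comb_sub => /eqP; rewrite (can_eq (subrK _)) => /eqP.
- exists f2, 0; split; last by move=> x; rewrite /edist Rad2.
  split.
  + move=> u v E; apply: injQ; apply: sqdist_eq0.
    by rewrite -D2 E sqdist_xx.
  + by move=> u v H; rewrite /edist D2; exact: (dF (inr u) (inr v) H).
  + move=> u v w H Hu Hv [t [Ht Hw]].
    apply: (segF (inr u) (inr v) (inr w) H).
    * by apply: contra Hu => /eqP [->].
    * by apply: contra Hv => /eqP [->].
    exists t; split => //.
    have : Q w - P a0 = (1 - t) *: (Q u - P a0) + t *: (Q v - P a0).
      apply: (coord_inj Ho Hp).
        by rewrite [in RHS]coordD !coordZ !HQs1 -scalerDl subrK scale1r.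
      by rewrite [in RHS]coordD !coordZ.
    by rewrite comb_sub => /eqP; rewrite (can_eq (subrK _)) => /eqP.
Qed.


Unset Implicit Arguments. Set Strict Implicit.

Theorem mainTheorem4 (R : realType) (T1 T2 : finType) (e1 : rel T1) (e2 : rel T2) :
  simple_graph e1 -> simple_graph e2 ->
  (2 <= #|T1|)%N -> (2 <= #|T2|)%N ->
  (forall (n1 n2 : nat) (r1 r2 : R),
      (1 <= n1)%N -> (1 <= n2)%N ->
      0 < r1 < 1 -> 0 < r2 < 1 -> r1 ^+ 2 + r2 ^+ 2 = 1 ->
      spherical_embedding e1 n1 r1 -> spherical_embedding e2 n2 r2 ->
      has_unit_dist_embedding R (graph_join e1 e2) (n1 + n2))
  /\
  (forall n : nat,
      has_unit_dist_embedding R (graph_join e1 e2) n ->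
      exists (n1 n2 : nat) (r1 r2 : R),
        [/\ (1 <= n1)%N, (1 <= n2)%N, (n1 + n2 = n)%N,
            0 < r1 < 1 & 0 < r2 < 1] /\
            [/\ r1 ^+ 2 + r2 ^+ 2 = 1,
                spherical_embedding e1 n1 r1 &
                spherical_embedding e2 n2 r2]).
Proof.
move=> _ _ h1 h2; split.
  move=> n1 n2 r1 r2 _ _ /andP [r10 _] /andP [r20 _] hr.
  exact: part1.
by move=> n; apply: part2.
Qed.
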